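(* Let $Y_1,Y_2,\ldots$ be i.i.d. Bernoulli$(1/2)$ and let $(Z^k)_k$ be generated by the bit-drop scheme described in the context, independently of $(Y_i)$. For $0\le k\le n$ let $L^a_n(k)$ be the length of a longest common subsequence of $Z^k$ and $Y_1\ldots Y_n$. Let $$E^n_4:=\bigcap_{k=\lceil 0.45n\rceil}^{n}\{L^a_n(k)\geq 0.65k\}.$$ Then $\lim_{n\to\infty}P(E^n_4)=1$.
   Context: Bit-drop scheme: let $V_1,V_2,\ldots$ be i.i.d. Bernoulli$(1/2)$ and let $T_3,T_4,\ldots$ be independent, independent of $(V_k)$, with $T_{k+1}$ uniform on $\{2,\ldots,k\}$. Set $Z^2:=V_1V_2$ and, given $Z^k=Z^k_1\ldots Z^k_k$, define $Z^{k+1}_j:=Z^k_j$ for $j<T_{k+1}$, $Z^{k+1}_{T_{k+1}}:=V_{k+1}$, $Z^{k+1}_j:=Z^k_{j-1}$ for $T_{k+1}<j\le k+1$. *)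

(* Defs.v *)
From HB Require Import structures.
From mathcomp Require Import all_boot all_order all_algebra.
From mathcomp Require Import all_classical all_reals all_analysis.
Set Implicit Arguments. Unset Strict Implicit. Unset Printing Implicit Defensive.
Import Order.TTheory GRing.Theory Num.Theory.

Definition lcs (s t : seq bool) : nat :=
  \max_(m : (size s).-tuple bool | subseq (mask m s) t) size (mask m s).

(* V k = V_k (k >= 1), T k = T_k (k >= 3).
   Z^2 = V_1 V_2 ; Z^{k+1} is Z^k with V_{k+1} inserted at (1-based)
   position T_{k+1}.  For k <= 1 (not covered by the paper) we set
   Z^0 = empty word and Z^1 = V_1. *)
(* Zaux j = Z^{j+2} *)
Fixpoint Zaux (V : nat -> bool) (T : nat -> nat) (j : nat) : seq bool :=
  match j with
  | 0 => [:: V 1; V 2]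
  | j'.+1 => let z := Zaux V T j' in
             take (T j.+2).-1 z ++ V j.+2 :: drop (T j.+2).-1 z
  end.

Definition Zbd (V : nat -> bool) (T : nat -> nat) (k : nat) : seq bool :=
  match k with
  | 0 => [::]
  | 1 => [:: V 1]
  | k'.+2 => Zaux V T k'
  end.

(* Finite sample space for fixed n: Y_1..Y_n, V_1..V_n, and T_3..T_n
   (stored in a finite function on 'I_n.+1, with T_j = 0 for j < 3). *)
Definition sample (n : nat) : finType :=
  (n.-tuple bool * n.-tuple bool * {ffun 'I_n.+1 -> 'I_n.+1})%type.

(* T_j uniform on {2,...,j-1} for 3 <= j <= n; dummy value 0 elsewhere.
   The uniform law on the set of valid samples is exactly the product law of
   the independent uniform variables Y_i, V_i, T_j. *)
Definition validT n (T : {ffun 'I_n.+1 -> 'I_n.+1}) : bool :=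
  [forall j : 'I_n.+1,
     if 3 <= j then (2 <= T j) && (T j <= j.-1) else (T j == 0 :> nat)].

Definition Omega n : {set sample n} := [set w : sample n | validT w.2].

Definition Yseq n (w : sample n) : seq bool := w.1.1.
Definition Vfun n (w : sample n) : nat -> bool := fun i => nth false w.1.2 i.-1.
Definition Tfun n (w : sample n) : nat -> nat := fun i => nat_of_ord (w.2 (inord i)).

Definition La n (w : sample n) (k : nat) : nat :=
  lcs (Zbd (Vfun w) (Tfun w) k) (Yseq w).

(* E^n_4 = /\_{k = ceil(0.45 n)}^{n} { L^a_n(k) >= 0.65 k };
   ceil(0.45 n) <= k  <->  45 n <= 100 k, and L >= 0.65 k <-> 100 L >= 65 k. *)
Definition E4 n (w : sample n) : bool :=
  [forall k : 'I_n.+1, (45 * n <= 100 * k) ==> (65 * k <= 100 * La w k)].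

Definition PE4 (R : realType) (n : nat) : R :=
  (#|[set w in Omega n | E4 w]|%:R / #|Omega n|%:R)%R.

(* Main.v *)
Require Import Defs.
From mathcomp Require Import all_boot all_order all_algebra.
From mathcomp Require Import all_classical all_reals all_analysis.
From mathcomp Require Import zify ring lra.
Import numFieldNormedType.Exports.
Set Implicit Arguments. Unset Strict Implicit. Unset Printing Implicit Defensive.
Import Order.TTheory GRing.Theory Num.Theory.

Fixpoint lcsw (s t : seq bool) {struct s} : seq bool :=
  match s with
  | [::] => [::]
  | x :: s' =>
    let fix aux (t : seq bool) : seq bool :=
      match t with
      | [::] => [::]
      | y :: t' => if x == y then x :: lcsw s' t'
                   else let a := lcsw s' t in let b := aux t' in
                        if size b <= size a then a else b
      end in aux t
  end.

Lemma lcsw_nil s : lcsw s [::] = [::]. Proof. by case: s. Qed.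
Lemma lcsw_cons x s y t : lcsw (x :: s) (y :: t) =
  if x == y then x :: lcsw s t else
  if size (lcsw (x :: s) t) <= size (lcsw s (y :: t)) then lcsw s (y :: t) else lcsw (x :: s) t.
Proof. by []. Qed.

Lemma lcsw_sub s t : subseq (lcsw s t) s && subseq (lcsw s t) t.
Proof.
elim: s t => [|x s IH] t; first by rewrite /= ?sub0seq.
elim: t => [|y t IHt]; first by rewrite lcsw_nil ?sub0seq.
rewrite lcsw_cons; case: eqP => [<-|_].
  by case/andP: (IH t) => h1 h2; rewrite /= eqxx h1 h2.
case: ifP => _.
  case/andP: (IH (y :: t)) => h1 h2; rewrite h2 andbT.
  by apply: subseq_trans h1 (subseq_cons _ _).
case/andP: IHt => h1 h2; rewrite h1 /=.
by apply: subseq_trans h2 (subseq_cons _ _).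
Qed.

Fixpoint bs (n : nat) : seq (seq bool) :=
  if n is n'.+1 then map (cons true) (bs n') ++ map (cons false) (bs n') else [:: [::]].

Lemma size_bs n s : s \in bs n -> size s = n.
Proof.
elim: n s => [|n IH] s /=; first by rewrite inE => /eqP->.
by rewrite mem_cat => /orP[] /mapP[x /IH h ->] /=; rewrite h.
Qed.

Lemma mem_bs n s : (s \in bs n) = (size s == n).
Proof.
apply/idP/eqP => [/size_bs //|<-].
elim: s => [|b s IH] //=; rewrite mem_cat.
by case: b; [rewrite map_f | rewrite orbC map_f].
Qed.

Lemma uniq_bs n : uniq (bs n).
Proof.
elim: n => //= n IH; rewrite cat_uniq !map_inj_uniq ?IH //=; try by move=> x y [].
rewrite andbT; apply/hasPn => s /mapP[x _ ->]; apply/negP => /mapP[y _] //.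
Qed.

Section Sums.
Variable (V : nmodType).
Local Open Scope ring_scope.

Lemma sum_bsS n (F : seq bool -> V) :
  \sum_(s <- bs n.+1) F s = \sum_(s <- bs n) F (true :: s) + \sum_(s <- bs n) F (false :: s).
Proof. by rewrite /= big_cat !big_map. Qed.

Lemma sum_bs_cat a c (F : seq bool -> V) :
  \sum_(s <- bs (a + c)) F s = \sum_(u <- bs a) \sum_(v <- bs c) F (u ++ v).
Proof.
elim: a F => [|a IH] F; first by rewrite /= big_seq1.
by rewrite addSn /= !big_cat !big_map !IH.
Qed.
End Sums.

Fixpoint Gw (m : nat) (u y : seq bool) : seq bool :=
  if m is m'.+1 then lcsw (take 6 u) (take 6 y) ++ Gw m' (drop 6 u) (drop 6 y) else [::].

Lemma Gw_sub m u y : subseq (Gw m u y) u && subseq (Gw m u y) y.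
Proof.
elim: m u y => [|m IH] u y /=; first by rewrite !sub0seq.
case/andP: (lcsw_sub (take 6 u) (take 6 y)) => h1 h2.
case/andP: (IH (drop 6 u) (drop 6 y)) => h3 h4.
apply/andP; split.
  by have := cat_subseq h1 h3; rewrite cat_take_drop.
by have := cat_subseq h2 h4; rewrite cat_take_drop.
Qed.

Lemma drop_catl T n (s1 s2 : seq T) : n <= size s1 -> drop n (s1 ++ s2) = drop n s1 ++ s2.
Proof.
rewrite drop_cat leq_eqVlt => /orP[/eqP->|->] //.
by rewrite ltnn subnn drop0 drop_size.
Qed.

Lemma Gw_cat m s1 s2 t1 t2 : 6 * m <= size s1 -> 6 * m <= size t1 ->
  Gw m (s1 ++ s2) (t1 ++ t2) = Gw m s1 t1.
Proof.
elim: m s1 s2 t1 t2 => [|m IH] s1 s2 t1 t2 //= hs ht.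
have h6s : 6 <= size s1 by apply: leq_trans hs; rewrite mulnS leq_addr.
have h6t : 6 <= size t1 by apply: leq_trans ht; rewrite mulnS leq_addr.
rewrite !takel_cat // !drop_catl // IH // size_drop leq_subRL // -mulnS //.
Qed.

Definition gb (a b : seq bool) : nat := size (lcsw a b).

Lemma size_GwS m u y : size (Gw m.+1 u y) = gb (take 6 u) (take 6 y) + size (Gw m (drop 6 u) (drop 6 y)).
Proof. by rewrite /= size_cat. Qed.

Section Sums2.
Variable (R : comPzRingType).
Local Open Scope ring_scope.

Lemma sum_bs1 n : \sum_(s <- bs n) (1 : R) = 2%:R ^+ n.
Proof.
elim: n => [|n IH]; first by rewrite big_seq1.
by rewrite sum_bsS IH exprS mulr_natl mulr2n.
Qed.

Definition Ablk (x : R) := \sum_(a <- bs 6) \sum_(b <- bs 6) x ^+ gb a b.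

Lemma sum4 (T : Type) (s1 s2 s3 s4 : seq T) (f g : T -> T -> R) :
  \sum_(u <- s1) \sum_(v <- s2) \sum_(u' <- s3) \sum_(v' <- s4) (f u u' * g v v')
  = (\sum_(u <- s1) \sum_(u' <- s3) f u u') * (\sum_(v <- s2) \sum_(v' <- s4) g v v').
Proof.
rewrite mulr_suml; apply: eq_bigr => u _.
rewrite exchange_big mulr_suml; apply: eq_bigr => u' _.
rewrite mulr_sumr; apply: eq_bigr => v _.
by rewrite mulr_sumr.
Qed.

Lemma sum_Gw (x : R) m r :
  \sum_(u <- bs (6 * m + r)) \sum_(y <- bs (6 * m + r)) x ^+ size (Gw m u y)
  = Ablk x ^+ m * 4%:R ^+ r.
Proof.
elim: m => [|m IH].
  rewrite muln0 add0n expr0 mul1r.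
  under eq_bigr do rewrite /= expr0 sum_bs1.
  rewrite -[X in \sum_(_ <- _) X]mulr1 -mulr_sumr sum_bs1 -exprMn_comm; last by rewrite /GRing.comm mulrC.
  by rewrite -natrM.
rewrite mulnS -addnA sum_bs_cat.
under eq_bigr => u _ do under eq_bigr => v _ do rewrite sum_bs_cat.
rewrite big_seq; under eq_bigr => u hu.
  rewrite big_seq; under eq_bigr => v hv.
    rewrite big_seq; under eq_bigr => u' hu'.
      rewrite big_seq; under eq_bigr => v' hv'.
        rewrite size_GwS !take_size_cat ?(size_bs hu) ?(size_bs hu') //.
        rewrite !drop_size_cat ?(size_bs hu) ?(size_bs hu') // exprD.
      over.
      rewrite -big_seq.
    over.
    rewrite -big_seq.
  over.
  rewrite -big_seq.
over.
rewrite -big_seq sum4 IH exprS mulrA //.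
Qed.
End Sums2.
Arguments Ablk : simpl never.

Lemma lcs_ge s t c : subseq c s -> subseq c t -> size c <= lcs s t.
Proof.
move=> /subseqP[m hm ->] hct; rewrite /lcs.
have hm' : size m == size s by apply/eqP.
exact: (@leq_bigmax_cond _ (fun m : (size s).-tuple bool => subseq (mask m s) t)
   (fun m : (size s).-tuple bool => size (mask m s)) (Tuple hm')).
Qed.

Fixpoint Paux (T : nat -> nat) (j : nat) : seq nat :=
  match j with
  | 0 => [:: 0; 1]
  | j'.+1 => let z := Paux T j' in
             take (T j.+2).-1 z ++ j.+1 :: drop (T j.+2).-1 z
  end.

Definition Pbd (T : nat -> nat) (k : nat) : seq nat :=
  match k with
  | 0 => [::]
  | 1 => [:: 0]
  | k'.+2 => Paux T k'
  end.

Lemma Zaux_map V T j : Zaux V T j = map (fun i => V i.+1) (Paux T j).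
Proof.
elim: j => [|j IH] //=.
by rewrite IH map_cat map_take /= map_drop.
Qed.

Lemma Zbd_map V T k : Zbd V T k = map (fun i => V i.+1) (Pbd T k).
Proof. by case: k => [|[|k]] //=; rewrite Zaux_map. Qed.

Lemma perm_Paux T j : perm_eq (Paux T j) (iota 0 j.+2).
Proof.
elim: j => [|j IH] //.
rewrite [Paux T j.+1]/=.
set t := (T j.+3).-1.
rewrite -[take t _ ++ _]/(take t (Paux T j) ++ [:: j.+2] ++ drop t (Paux T j)).
rewrite perm_catCA cat_take_drop.
apply: (@perm_trans _ (j.+2 :: iota 0 j.+2)); first by rewrite perm_cons.
rewrite -[j.+3]addn1 iotaD add0n cats1.
by rewrite perm_sym perm_rcons.
Qed.

Lemma perm_Pbd T k : perm_eq (Pbd T k) (iota 0 k).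
Proof. by case: k => [|[|k]] //=; rewrite perm_Paux. Qed.

Section Reindex.
Variable (V : nmodType).
Local Open Scope ring_scope.

Lemma sum_tuple_bs n (F : seq bool -> V) :
  \sum_(t : n.-tuple bool) F t = \sum_(s <- bs n) F s.
Proof.
rewrite -(big_map val xpredT F); apply: perm_big; apply: uniq_perm.
- by rewrite map_inj_uniq ?index_enum_uniq //; apply: val_inj.
- exact: uniq_bs.
move=> s; rewrite mem_bs; apply/mapP/eqP => [[t _ ->]|hs]; first exact: size_tuple.
have hs' : size s == n by apply/eqP.
by exists (Tuple hs'); rewrite ?mem_index_enum.
Qed.

Lemma sum_reindex n k (p : seq nat) (F : seq bool -> V) :
  perm_eq p (iota 0 k) -> (k <= n)%N ->
  \sum_(t : n.-tuple bool) F (map (nth false t) p) = \sum_(t : n.-tuple bool) F (take k t).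
Proof.
move=> hp hk.
pose q := p ++ iota k (n - k).
have hq : perm_eq q (iota 0 n).
  by rewrite /q -{2}(subnKC hk) iotaD add0n perm_cat2r.
have sq : size q = n by rewrite (perm_size hq) size_iota.
pose h (t : n.-tuple bool) : n.-tuple bool := insubd t (map (nth false t) q).
have hv t : tval (h t) = map (nth false t) q.
  by rewrite /h insubdK // -topredE /= size_map sq.
have hinj : injective h.
  move=> t1 t2 /(congr1 (@tval n bool)); rewrite !hv => /eq_in_map e.
  apply: val_inj; apply: (@eq_from_nth _ false); first by rewrite !size_tuple.
  move=> i; rewrite size_tuple => hi; apply: e.
  by rewrite (perm_mem hq) mem_iota.
rewrite [RHS](reindex_inj hinj); apply: eq_bigr => t _.
by rewrite hv /q map_cat take_size_cat ?size_map // (perm_size hp) size_iota.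
Qed.
End Reindex.

Definition Gs n (w : sample n) k :=
  size (Gw (k %/ 6) (Zbd (Vfun w) (Tfun w) k) (Yseq w)).

Lemma Gs_le n (w : sample n) k : Gs w k <= La w k.
Proof.
rewrite /Gs /La; case/andP: (Gw_sub (k %/ 6) (Zbd (Vfun w) (Tfun w) k) (Yseq w)).
exact: lcs_ge.
Qed.

Lemma bad_exp n (w : sample n) k : 100 * La w k < 65 * k ->
  10 * Gs w k <= 39 * (k %/ 6).+1.
Proof.
move=> h; have := Gs_le w k; have := leq_divM k 6.
have : k < (k %/ 6).+1 * 6 by rewrite ltn_ceil.
lia.
Qed.

Section Bound.
Variable R : realFieldType.
Local Open Scope ring_scope.

Definition mu : R := 99 / 100.
Lemma mu_ge0 : 0 <= mu. Proof. rewrite /mu; lra. Qed.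
Lemma mu_gt0 : 0 < mu. Proof. rewrite /mu; lra. Qed.
Lemma mu_le1 : mu <= 1. Proof. rewrite /mu; lra. Qed.

Lemma sum_sample n (F : n.-tuple bool -> n.-tuple bool -> {ffun 'I_n.+1 -> 'I_n.+1} -> R) :
  \sum_(w : sample n) F w.1.1 w.1.2 w.2 = \sum_T \sum_Y \sum_V F Y V T.
Proof.
symmetry; rewrite exchange_big /=.
under eq_bigr => Y _ do rewrite exchange_big /=.
rewrite pair_bigA pair_bigA /=.
by [].
Qed.

Lemma card_sample n (P : pred (sample n)) :
  (#|[set w in Omega n | P w]|)%:R = \sum_(w : sample n) ((validT w.2 && P w) : nat)%:R :> R.
Proof.
rewrite -sum1dep_card natr_sum big_mkcond /=; apply: eq_bigr => w _.
by rewrite inE; case: (_ && _).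
Qed.

Lemma sum_tuple_const n (c : R) : \sum_(t : n.-tuple bool) c = c * 2%:R ^+ n.
Proof.
rewrite (sum_tuple_bs _ (fun _ => c)).
transitivity (\sum_(s <- bs n) c * 1); first by apply: eq_bigr => *; rewrite mulr1.
by rewrite -mulr_sumr sum_bs1.
Qed.

Lemma card_Omega n :
  (#|Omega n|)%:R = \sum_(T : {ffun 'I_n.+1 -> 'I_n.+1}) ((validT T : nat)%:R * 4%:R ^+ n) :> R.
Proof.
have -> : Omega n = [set w in Omega n | true].
  by apply/setP => w; rewrite !inE andbT.
rewrite card_sample.
rewrite (sum_sample (fun Y V T => ((validT T && true : bool) : nat)%:R)).
apply: eq_bigr => T _; rewrite andbT.
under eq_bigr => Y _ do rewrite sum_tuple_const.
rewrite sum_tuple_const -mulrA; congr (_ * _).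
by rewrite -exprMn -natrM.
Qed.

Lemma sum_sample' n (G : sample n -> R) :
  \sum_(w : sample n) G w = \sum_T \sum_Y \sum_V G ((Y, V), T).
Proof.
rewrite -(sum_sample (fun Y V T => G ((Y, V), T))).
by apply: eq_bigr => -[[Y V] T].
Qed.

Lemma Gw_take m k (V Y : seq bool) : (6 * m <= k)%N -> (k <= size V)%N -> (6 * m <= size Y)%N ->
  Gw m (take k V) Y = Gw m V Y.
Proof.
move=> h1 h2 h3.
have := @Gw_cat m (take k V) (drop k V) Y [::]; rewrite cat_take_drop cats0 => ->//.
by rewrite size_take; case: ifP => // _; apply: leq_trans h1 h2.
Qed.

Lemma count_bound n k : (k <= n)%N ->
  (#|[set w in Omega n | (100 * La w k < 65 * k)%N]|)%:R <=
  #|Omega n|%:R * (mu ^+ (39 * (k %/ 6).+1)%N)^-1 * (Ablk (mu ^+ 10) / 4096%:R) ^+ (k %/ 6)%N :> R.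
Proof.
move=> hkn; set A := Ablk (mu ^+ 10); set m := (k %/ 6)%N; set x := mu ^+ 10; set iv := (mu ^+ (39 * m.+1)%N)^-1.
have h6m : (6 * m <= k)%N by rewrite mulnC leq_divM.
have h6n : (6 * m <= n)%N by apply: leq_trans hkn.
have hiv : 0 <= iv by rewrite invr_ge0 exprn_ge0 // mu_ge0.
rewrite card_sample card_Omega.
apply: (@le_trans _ _ (\sum_(w : sample n) ((validT w.2 : nat)%:R * (iv * x ^+ Gs w k)))).
  apply: ler_sum => w _.
  case: (validT w.2) => /=; last by rewrite !mul0r.
  rewrite !mul1r; case: (ltnP (100 * La w k) (65 * k)) => hb /=; last first.
    by rewrite mulr_ge0 // exprn_ge0 // exprn_ge0 // mu_ge0.
  have := bad_exp hb; rewrite -/m => he.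
  rewrite /iv /x -exprM mulrC ler_pdivlMr ?mul1r; last by rewrite exprn_gt0 // mu_gt0.
  by rewrite ler_wiXn2l // ?mu_ge0 ?mu_le1.
rewrite le_eqVlt; apply/orP; left; apply/eqP.
rewrite sum_sample' mulr_suml mulr_suml; apply: eq_bigr => T _ /=.
under eq_bigr => Y _ do under eq_bigr => V _ do rewrite mulrA.
under eq_bigr => Y _ do rewrite -mulr_sumr.
rewrite -mulr_sumr.
suff -> : \sum_Y \sum_V x ^+ Gs ((Y, V), T) k = 4%:R ^+ n * (A / 4096%:R) ^+ m by ring.
have E : forall (Y : n.-tuple bool), \sum_V x ^+ Gs ((Y, V), T) k =
   \sum_(V : n.-tuple bool) x ^+ size (Gw m V Y).
  move=> Y.
  transitivity (\sum_(V : n.-tuple bool) x ^+ size (Gw m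
      (map (nth false V) (Pbd (fun i => nat_of_ord (T (inord i))) k)) Y)).
    by apply: eq_bigr => V _; rewrite /Gs Zbd_map.
  rewrite (@sum_reindex _ n k _ (fun s => x ^+ size (Gw m s Y))) ?perm_Pbd //.
  apply: eq_bigr => V _; rewrite Gw_take // ?size_tuple //.
under eq_bigr => Y _ do rewrite E.
under eq_bigr => Y _ do rewrite (sum_tuple_bs _ (fun s => x ^+ size (Gw m s Y))).
rewrite (sum_tuple_bs _ (fun y => \sum_(s <- bs n) x ^+ size (Gw m s y))) exchange_big /=.
have := sum_Gw x m (n - 6 * m); rewrite subnKC // => ->.
rewrite -/A expr_div_n -{2}(subnKC h6n) exprD exprM.
have -> : (4%:R : R) ^+ 6 = 4096%:R by rewrite -natrX.
have h4 : (4096%:R : R) != 0 by rewrite pnatr_eq0.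
field.
by rewrite expf_neq0.
Qed.

Lemma pow_bound (r : R) j : 0 <= r -> r <= 1 -> r ^+ j * (1 + j%:R * (1 - r)) <= 1.
Proof.
move=> h0 h1; elim: j => [|j IH]; first by rewrite expr0 mul0r addr0 mulr1.
have hj : r ^+ j.+1 <= 1 by rewrite exprn_ile1.
have hj0 : 0 <= r ^+ j.+1 by rewrite exprn_ge0.
have e : r ^+ j.+1 * (1 + j.+1%:R * (1 - r)) =
   r * (r ^+ j * (1 + j%:R * (1 - r))) + r ^+ j.+1 * (1 - r).
  by rewrite exprS -natr1; ring.
rewrite e; have : r * (r ^+ j * (1 + j%:R * (1 - r))) <= r * 1 by rewrite ler_wpM2l.
have : r ^+ j.+1 * (1 - r) <= 1 * (1 - r) by rewrite ler_wpM2r ?subr_ge0.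
lra.
Qed.

Lemma pow_bound2 (r : R) j : 0 <= r -> r < 1 -> r ^+ j <= ((j.+1)%:R * (1 - r))^-1.
Proof.
move=> h0 h1; have h := pow_bound j h0 (ltW h1).
have hp : 0 < j.+1%:R * (1 - r) by rewrite mulr_gt0 // ?ltr0Sn // subr_gt0.
rewrite -(ler_pM2r hp) mulVf ?gt_eqF //; apply: le_trans h.
rewrite ler_wpM2l ?exprn_ge0 // -natr1 mulrDl mul1r.
have : 0 <= j%:R * (1 - r) by rewrite mulr_ge0 // subr_ge0 ltW.
have : r * 1 <= 1 by lra.
have : 0 <= r * (1 - r) by rewrite mulr_ge0 // subr_ge0 ltW.
lra.
Qed.
End Bound.

Lemma card_setP n (P : pred (sample n)) :
  #|[set w in Omega n | P w]| = \sum_(w : sample n) (validT w.2 && P w).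
Proof.
rewrite -sum1dep_card big_mkcond /=; apply: eq_bigr => w _.
by rewrite inE; case: (_ && _).
Qed.

Lemma E4_union n : #|Omega n| <= #|[set w in Omega n | E4 w]| +
  \sum_(k < n.+1 | 45 * n <= 100 * k) #|[set w in Omega n | 100 * La w k < 65 * k]|.
Proof.
have -> : #|Omega n| = #|[set w in Omega n | true]|.
  by apply: eq_card => w; rewrite !inE andbT.
under eq_bigr => k _ do rewrite (card_setP (fun w => 100 * La w k < 65 * k)).
rewrite (card_setP (fun _ => true)) (card_setP (@E4 n)).
rewrite exchange_big /= -big_split /=; apply: leq_sum => w _.
rewrite andbT; case: (validT w.2) => //=.
case hE : (E4 w) => //=.
move/negbT: hE; rewrite /E4 => /forallPn[k]; rewrite negb_imply => /andP[hc hb].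
rewrite -ltnNge in hb; by rewrite add0n (bigD1 k) //= hb.
Qed.


Definition Lgb := [seq gb a b | a <- bs 6, b <- bs 6].
Definition Hgb := nseq 2 0 ++ nseq 28 1 ++ nseq 190 2 ++ nseq 824 3 ++ nseq 1902 4 ++ nseq 1086 5 ++ nseq 64 6.

Lemma sort_Lgb : sort leq Lgb = Hgb.
Proof. by vm_compute. Qed.

Local Open Scope ring_scope.

Lemma sum_nseq (V : nmodType) n a (F : nat -> V) : \sum_(i <- nseq n a) F i = F a *+ n.
Proof. by rewrite big_nseq iter_addr_0. Qed.

Lemma Ablk_val (R : comPzRingType) (x : R) :
  Ablk x = 2%:R + 28%:R * x + 190%:R * x ^+ 2 + 824%:R * x ^+ 3 + 1902%:R * x ^+ 4
           + 1086%:R * x ^+ 5 + 64%:R * x ^+ 6.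
Proof.
rewrite /Ablk -(big_allpairs_dep (h := gb) (F := fun j => x ^+ j)) -/Lgb.
rewrite (perm_big (sort leq Lgb)); last by rewrite perm_sym perm_sort.
rewrite sort_Lgb /Hgb !big_cat !sum_nseq /=.
ring.

Qed.

Lemma r_lt1 (R : realFieldType) :
  Ablk ((99 / 100 : R) ^+ 10) < 4096%:R * (99 / 100) ^+ 39.
Proof. rewrite Ablk_val. lra. Qed.

Section Final.
Variable R : realType.
Local Open Scope ring_scope.

Definition cc : R := (mu R ^+ 39)^-1.
Definition rr : R := Ablk ((mu R) ^+ 10) / (4096%:R * mu R ^+ 39).

Lemma cc_ge0 : 0 <= cc. Proof. by rewrite /cc invr_ge0 exprn_ge0 // mu_ge0. Qed.

Lemma rr_ge0 : 0 <= rr.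
Proof.
rewrite /rr.
apply: divr_ge0.
  rewrite Ablk_val.
  have h k : 0 <= (mu R) ^+ 10 ^+ k by apply: exprn_ge0; apply: exprn_ge0; apply: mu_ge0.
  have := h 1%N; have := h 2%N; have := h 3%N; have := h 4%N; have := h 5%N; have := h 6%N.
  rewrite expr1. lra.
apply: mulr_ge0; first exact: ler0n.
apply: exprn_ge0; apply: mu_ge0.
Qed.

Lemma rr_lt1 : rr < 1.
Proof.
rewrite /rr ltr_pdivrMr ?mul1r; last first.
  apply: mulr_gt0; first exact: ltr0n.
  apply: exprn_gt0; apply: mu_gt0.
exact: r_lt1.
Qed.

Lemma alg_id (a A : R) m : a != 0 ->
  (a ^+ (39 * m.+1)%N)^-1 * (A / 4096%:R) ^+ m = (a ^+ 39)^-1 * (A / (4096%:R * a ^+ 39)) ^+ m.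
Proof.
move=> ha; rewrite exprM exprS.
have h1 : a ^+ 39 != 0 by apply: expf_neq0.
move: h1; set b := a ^+ 39 => h1; clearbody b.
rewrite !expr_div_n exprMn.
have h2 : (4096%:R : R) != 0 by rewrite pnatr_eq0.
field.
by rewrite !expf_neq0.
Qed.

Lemma bad_k_bound n k : (k <= n)%N -> (45 * n <= 100 * k)%N ->
  (#|[set w in Omega n | (100 * La w k < 65 * k)%N]|)%:R <=
  #|Omega n|%:R * (cc * rr ^+ (n %/ 14)%N) :> R.
Proof.
move=> hkn hk.
apply: (le_trans (count_bound R hkn)).
rewrite -mulrA; apply: ler_wpM2l; first exact: ler0n.
have e := alg_id (Ablk (mu R ^+ 10)) (k %/ 6)%N (lt0r_neq0 (mu_gt0 R)).
rewrite e; apply: ler_wpM2l; first exact: cc_ge0.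
apply: ler_wiXn2l; [exact: rr_ge0 | exact: ltW rr_lt1 |].
lia.
Qed.

Lemma Omega_gt0 n : (0 < #|Omega n|)%N.
Proof.
apply/card_gt0P.
pose T0 : {ffun 'I_n.+1 -> 'I_n.+1} := [ffun j : 'I_n.+1 => if (3 <= j)%N then inord 2 else ord0].
exists ((nseq_tuple n false, nseq_tuple n false), T0).
rewrite /Omega inE /validT; apply/forallP => j /=; rewrite ffunE.
case: ifP => h3; rewrite h3 //.
have hj := ltn_ord j.
rewrite inordK; last by lia.
by apply/andP; split => //; lia.
Qed.

Lemma main_bound n : 0 <= 1 - PE4 R n <= (n.+1)%:R * (cc * rr ^+ (n %/ 14)%N).
Proof.
rewrite /PE4.
set O := #|Omega n|; set E := #|[set w in Omega n | E4 w]|.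
set X := cc * rr ^+ (n %/ 14)%N.
have hX : 0 <= X by apply: mulr_ge0; [exact: cc_ge0 | apply: exprn_ge0; exact: rr_ge0].
have hO : 0 < (O%:R : R) by rewrite ltr0n; exact: Omega_gt0.
have hEO : (E <= O)%N.
  apply: subset_leq_card; apply/fintype.subsetP => w; rewrite inE => /andP[] //.
apply/andP; split.
  rewrite subr_ge0 ler_pdivrMr // mul1r ler_nat //.
have hU := E4_union n; rewrite -/O -/E in hU.
have hS : (O%:R : R) - E%:R <=
    \sum_(k < n.+1 | (45 * n <= 100 * k)%N) (#|[set w in Omega n | (100 * La w k < 65 * k)%N]|)%:R.
  rewrite -natr_sum lerBlDl -natrD ler_nat //.
have hS2 : \sum_(k < n.+1 | (45 * n <= 100 * k)%N)
     (#|[set w in Omega n | (100 * La w k < 65 * k)%N]|)%:R <= (O%:R * X) *+ n.+1 :> R.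
  apply: (@le_trans _ _ (\sum_(k < n.+1 | (45 * n <= 100 * k)%N) (O%:R * X))).
    apply: ler_sum => k hk; apply: bad_k_bound => //.
    by rewrite -ltnS.
  rewrite big_mkcond /=.
  apply: (@le_trans _ _ (\sum_(k < n.+1) (O%:R * X))).
    apply: ler_sum => k _; case: ifP => _ //.
    by apply: mulr_ge0 => //; apply: ltW.
  by rewrite big_const_ord iter_addr_0.
have e : 1 - E%:R / O%:R = (O%:R - E%:R) / (O%:R : R).
  by field; apply: lt0r_neq0.
rewrite e ler_pdivrMr //.
apply: (le_trans hS); apply: (le_trans hS2).
by rewrite -mulr_natl le_eqVlt; apply/orP; left; apply/eqP; ring.
Qed.
End Final.

Local Open Scope classical_set_scope.
Local Open Scope ring_scope.

Theorem lemma8 (R : realType) : PE4 R n @[n --> \oo] --> (1 : R).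
Proof.
apply/cvgrPdist_lt => e he.
have hq : 0 < 1 - rr R by rewrite subr_gt0; exact: rr_lt1.
set q := 1 - rr R in hq *.
have hQ : 0 < q ^+ 2 by apply: exprn_gt0.
set C := 28%:R * cc R / (e * q ^+ 2).
exists (28 * Num.bound C)%N => // n /= hn.
have /andP[h0 h1] := main_bound R n.
rewrite ger0_norm //.
set j := (n %/ 28)%N.
have hj : (Num.bound C <= j)%N by rewrite /j; lia.
have h2j : (2 * j <= n %/ 14)%N by rewrite /j; lia.
have hnj : (n.+1 <= 28 * j.+1)%N by rewrite /j; lia.
set J := (j.+1%:R : R).
have hJ : 0 < J by rewrite /J ltr0n.
have hCJ : C < J.
  have hC0 : 0 <= C.
    by rewrite /C divr_ge0 ?mulr_ge0 ?ler0n ?cc_ge0 //; apply: ltW => //; apply: mulr_gt0.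
  apply: (lt_le_trans (archi_boundP hC0)); rewrite /J ler_nat; lia.
have hrr0 := rr_ge0 R.
have hp1 : rr R ^+ (n %/ 14)%N <= (rr R ^+ j) ^+ 2.
  rewrite -exprM; apply: ler_wiXn2l => //; first exact: ltW (rr_lt1 R).
  by rewrite mulnC.
have hp2 : (rr R ^+ j) ^+ 2 <= ((J * q)^-1) ^+ 2.
  have hb := pow_bound2 j hrr0 (rr_lt1 R); rewrite -/J -/q in hb.
  rewrite !expr2; apply: ler_pM => //; exact: exprn_ge0.
have hcc := cc_ge0 R.
apply: (le_lt_trans h1).
have hn1 : (n.+1%:R : R) <= 28%:R * J by rewrite /J -natrM ler_nat.
apply: (@le_lt_trans _ _ (28%:R * J * (cc R * ((J * q)^-1) ^+ 2))).
  apply: ler_pM => //.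
    by apply: mulr_ge0 => //; apply: exprn_ge0.
  apply: ler_wpM2l => //; exact: le_trans hp1 hp2.
have e1 : 28%:R * J * (cc R * ((J * q)^-1) ^+ 2) = 28%:R * cc R / (J * q ^+ 2).
  by field; apply/andP; split; apply: lt0r_neq0.
rewrite e1 ltr_pdivrMr ?mulr_gt0 //.
move: hCJ; rewrite /C ltr_pdivrMr ?mulr_gt0 // => hCJ.
by rewrite mulrCA.
Qed.
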